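(* For $n\in\mathbb{Z}^+$ we have $$\begin{aligned}&t(1,3,16;n)=2N(1,3,16;2n+5)=t(2,2,3;(n-1)/4)&&\text{for } n\equiv 1\pmod 4,\\ &t(1,3,48;n)=2N(1,3,48;2n+13)=t(1,6,6;n/4)&&\text{for } n\equiv 0\pmod 4,\\ &t(1,3,4;n)=\tfrac 43N(1,3,4;2n+2)&&\text{for } n\equiv 3,5\pmod 8,\\ &t(1,3,12;n)=\tfrac 43N(1,3,12;2n+4)&&\text{for } n\equiv 0,2\pmod 8,\\ &t(1,3,36;n)=\tfrac 43N(1,3,36;2n+10)&&\text{for } n\equiv 1,7\pmod 8,\\ &t(3,4,9;n)=\tfrac 43N(3,4,9;2n+4)&&\text{for } n\equiv 2,4\pmod 8.\end{aligned}$$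
   Context: $\mathbb{Z}^+$ is the set of positive integers. For $a,b,c\in\mathbb{Z}^+$ and nonnegative integer $n$, $N(a,b,c;n)$ denotes the number of triples $(x,y,z)\in\mathbb{Z}^3$ with $n=ax^2+by^2+cz^2$, and $t(a,b,c;n)$ denotes the number of triples $(x,y,z)\in\mathbb{Z}^3$ with $n=a\frac{x(x+1)}2+b\frac{y(y+1)}2+c\frac{z(z+1)}2$. *)

(* Defs.v *)
From Stdlib Require Import ZArith List Lia.
Import ListNotations.
Open Scope Z_scope.

Definition Zrange (lo hi : Z) : list Z :=
  map (fun k => lo + Z.of_nat k) (seq 0 (Z.to_nat (hi - lo + 1))).

Definition count3 (box : list Z) (P : Z -> Z -> Z -> bool) : Z :=
  Z.of_nat (length (filter (fun t => match t with (x,(y,z)) => P x y z end)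
     (list_prod box (list_prod box box)))).

(* N(a,b,c;n) = #{(x,y,z) in Z^3 : n = a x^2 + b y^2 + c z^2}.
   For a,b,c >= 1 and n >= 0 every solution satisfies |x|,|y|,|z| <= n,
   so counting over the box [-n,n]^3 counts all solutions. *)
Definition Nrep (a b c n : Z) : Z :=
  count3 (Zrange (- n) n)
    (fun x y z => Z.eqb n (a*x*x + b*y*y + c*z*z)).

(* t(a,b,c;n) = #{(x,y,z) in Z^3 : n = a x(x+1)/2 + b y(y+1)/2 + c z(z+1)/2}.
   For a,b,c >= 1 and n >= 0 every solution has x,y,z in [-n-1, n]. *)
Definition trep (a b c n : Z) : Z :=
  count3 (Zrange (- n - 1) n)
    (fun x y z => Z.eqb (2*n) (a*(x*(x+1)) + b*(y*(y+1)) + c*(z*(z+1)))).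

(* Main.v *)
Require Import Defs.
From Stdlib Require Import ZArith List Lia Bool.
Import ListNotations.
Open Scope Z_scope.


Lemma NoDup_prod {A B} (l1 : list A) (l2 : list B) :
  NoDup l1 -> NoDup l2 -> NoDup (list_prod l1 l2).
Proof.
  induction 1 as [|a l1 Ha Hl1 IH]; intros H2; simpl; [constructor|].
  apply NoDup_app; auto.
  - apply NoDup_map_NoDup_ForallPairs; auto.
    intros x y _ _ E; now injection E.
  - intros [x y] H1 H3. apply in_map_iff in H1. destruct H1 as [b [E _]].
    injection E as <- <-. apply in_prod_iff in H3. tauto.
Qed.

Lemma In_Zrange lo hi k : In k (Zrange lo hi) <-> lo <= k <= hi.
Proof.
  unfold Zrange. rewrite in_map_iff. split.
  - intros [j [<- Hj]]. apply in_seq in Hj. lia.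
  - intros H. exists (Z.to_nat (k - lo)). split; [lia|]. apply in_seq. lia.
Qed.

Lemma NoDup_Zrange lo hi : NoDup (Zrange lo hi).
Proof.
  unfold Zrange. apply NoDup_map_NoDup_ForallPairs; [|apply seq_NoDup].
  intros a b _ _ E. lia.
Qed.

Lemma bij_len {A B} (l1 : list A) (l2 : list B) (P : A -> bool) (Q : B -> bool) (f : A -> B) :
  NoDup l1 -> NoDup l2 ->
  (forall a, In a l1 -> P a = true -> In (f a) l2 /\ Q (f a) = true) ->
  (forall a1 a2, In a1 l1 -> In a2 l1 -> P a1 = true -> P a2 = true -> f a1 = f a2 -> a1 = a2) ->
  (forall b, In b l2 -> Q b = true -> exists a, In a l1 /\ P a = true /\ f a = b) ->
  length (filter P l1) = length (filter Q l2).
Proof.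
  intros N1 N2 Hf Hi Hs.
  assert (ND : NoDup (map f (filter P l1))).
  { apply NoDup_map_NoDup_ForallPairs; [|now apply NoDup_filter].
    intros a1 a2 H1 H2. apply filter_In in H1, H2. apply Hi; tauto. }
  assert (I1 : incl (map f (filter P l1)) (filter Q l2)).
  { intros b Hb. apply in_map_iff in Hb. destruct Hb as [a [<- Ha]].
    apply filter_In in Ha. apply filter_In. apply Hf; tauto. }
  assert (I2 : incl (filter Q l2) (map f (filter P l1))).
  { intros b Hb. apply filter_In in Hb. destruct (Hs b) as [a [Ha [HPa <-]]]; try tauto.
    apply in_map. apply filter_In. tauto. }
  apply NoDup_incl_length in I1; auto. apply NoDup_incl_length in I2; [|now apply NoDup_filter].
  rewrite length_map in *. lia.
Qed.

Definition inb (lo hi x : Z) := lo <= x <= hi.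

Lemma count3_bij lo1 hi1 lo2 hi2 (P Q : Z -> Z -> Z -> bool) (f : Z -> Z -> Z -> Z * (Z * Z)) :
  (forall x y z, lo1 <= x <= hi1 -> lo1 <= y <= hi1 -> lo1 <= z <= hi1 -> P x y z = true ->
     match f x y z with (a,(b,c)) => (lo2 <= a <= hi2 /\ lo2 <= b <= hi2 /\ lo2 <= c <= hi2) /\ Q a b c = true end) ->
  (forall x y z x' y' z', P x y z = true -> P x' y' z' = true -> f x y z = f x' y' z' -> x = x' /\ y = y' /\ z = z') ->
  (forall a b c, lo2 <= a <= hi2 -> lo2 <= b <= hi2 -> lo2 <= c <= hi2 -> Q a b c = true ->
     exists x y z, (lo1 <= x <= hi1 /\ lo1 <= y <= hi1 /\ lo1 <= z <= hi1) /\ P x y z = true /\ f x y z = (a,(b,c))) ->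
  count3 (Zrange lo1 hi1) P = count3 (Zrange lo2 hi2) Q.
Proof.
  intros Hf Hi Hs. unfold count3. f_equal.
  apply bij_len with (f := fun t => match t with (x,(y,z)) => f x y z end);
    try (repeat apply NoDup_prod; apply NoDup_Zrange).
  - intros [x [y z]] Hin HP. rewrite !in_prod_iff, !In_Zrange in Hin.
    specialize (Hf x y z ltac:(tauto) ltac:(tauto) ltac:(tauto) HP).
    destruct (f x y z) as [a [b c]]. rewrite !in_prod_iff, !In_Zrange. tauto.
  - intros [x [y z]] [x' [y' z']] _ _ H1 H2 E. destruct (Hi _ _ _ _ _ _ H1 H2 E) as [-> [-> ->]]. auto.
  - intros [a [b c]] Hin HQ. rewrite !in_prod_iff, !In_Zrange in Hin.
    destruct (Hs a b c ltac:(tauto) ltac:(tauto) ltac:(tauto) HQ) as [x [y [z [Hb [HP E]]]]].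
    exists (x,(y,z)). rewrite !in_prod_iff, !In_Zrange. tauto.
Qed.

Lemma count3_split l (P R : Z -> Z -> Z -> bool) :
  count3 l P = count3 l (fun x y z => P x y z && R x y z) + count3 l (fun x y z => P x y z && negb (R x y z)).
Proof.
  unfold count3. rewrite <- Nat2Z.inj_add. f_equal.
  induction (list_prod l (list_prod l l)) as [|[x [y z]] t IH]; simpl; auto.
  destruct (P x y z), (R x y z); simpl; rewrite IH; auto.
Qed.

Definition C (a b c m : Z) (R : Z -> Z -> Z -> bool) :=
  count3 (Zrange (-m) m) (fun x y z => Z.eqb m (a*x*x + b*y*y + c*z*z) && R x y z).

Lemma sq_le x t : 0 <= t -> x * x <= t -> -t <= x <= t.
Proof. intros. nia. Qed.

Lemma C_bound a b c m x y z : 1 <= a -> 1 <= b -> 1 <= c -> m = a*x*x + b*y*y + c*z*z ->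
  -m <= x <= m /\ -m <= y <= m /\ -m <= z <= m.
Proof.
  intros. assert (0 <= x*x) by nia. assert (0 <= y*y) by nia. assert (0 <= z*z) by nia.
  split; [|split]; apply sq_le; nia.
Qed.

Lemma C_bij a b c m R a' b' c' m' R' (f : Z -> Z -> Z -> Z * (Z * Z)) :
  1 <= a -> 1 <= b -> 1 <= c -> 1 <= a' -> 1 <= b' -> 1 <= c' ->
  (forall x y z, m = a*x*x + b*y*y + c*z*z -> R x y z = true ->
     match f x y z with (p,(q,r)) => m' = a'*p*p + b'*q*q + c'*r*r /\ R' p q r = true end) ->
  (forall x y z x' y' z', R x y z = true -> R x' y' z' = true -> f x y z = f x' y' z' -> x = x' /\ y = y' /\ z = z') ->
  (forall p q r, m' = a'*p*p + b'*q*q + c'*r*r -> R' p q r = true ->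
     exists x y z, (m = a*x*x + b*y*y + c*z*z /\ R x y z = true) /\ f x y z = (p,(q,r))) ->
  C a b c m R = C a' b' c' m' R'.
Proof.
  intros ha hb hc ha' hb' hc' Hf Hi Hs. unfold C. apply count3_bij with f.
  - intros x y z _ _ _ H. apply andb_true_iff in H. destruct H as [E HR].
    apply Z.eqb_eq in E. specialize (Hf x y z E HR). destruct (f x y z) as [p [q r]].
    destruct Hf as [E' HR']. split; [apply (C_bound a' b' c'); auto|]. rewrite E', HR', Z.eqb_refl. auto.
  - intros x y z x' y' z' H1 H2 E. apply andb_true_iff in H1, H2. apply Hi; tauto.
  - intros p q r _ _ _ H. apply andb_true_iff in H. destruct H as [E HR].
    apply Z.eqb_eq in E. destruct (Hs p q r E HR) as [x [y [z [[E1 H1] E2]]]].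
    exists x, y, z. split; [apply (C_bound a b c); auto|]. rewrite <- E1, H1, Z.eqb_refl. auto.
Qed.

Lemma count3_ext l (P Q : Z -> Z -> Z -> bool) :
  (forall x y z, P x y z = Q x y z) -> count3 l P = count3 l Q.
Proof.
  intros H. unfold count3. f_equal. f_equal. apply filter_ext. intros [x [y z]]. apply H.
Qed.

Lemma C_split a b c m R S :
  C a b c m R = C a b c m (fun x y z => R x y z && S x y z) + C a b c m (fun x y z => R x y z && negb (S x y z)).
Proof.
  unfold C. rewrite (count3_split _ _ S). f_equal; apply count3_ext; intros; symmetry; apply andb_assoc.
Qed.

Lemma Nrep_C a b c m : Nrep a b c m = C a b c m (fun _ _ _ => true).
Proof. unfold Nrep, C. apply count3_ext. intros. now rewrite andb_true_r. Qed.

Lemma C_ext a b c m R R' :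
  (forall x y z, m = a*x*x + b*y*y + c*z*z -> R x y z = true -> R' x y z = true) ->
  (forall x y z, m = a*x*x + b*y*y + c*z*z -> R' x y z = true -> R x y z = true) ->
  C a b c m R = C a b c m R'.
Proof.
  intros H1 H2. unfold C. apply count3_ext. intros x y z.
  destruct (Z.eqb_spec m (a*x*x + b*y*y + c*z*z)) as [E|E]; simpl; auto.
  specialize (H1 x y z E). specialize (H2 x y z E).
  destruct (R x y z), (R' x y z); auto. symmetry; auto.
Qed.


Ltac bprep := cbv beta in *; repeat match goal with
 | H: _ && _ = true |- _ => apply andb_true_iff in H; destruct H
 | H: negb _ = true |- _ => apply negb_true_iff in H
 | H: (_ =? _) = true |- _ => apply Z.eqb_eq in H
 | H: (_ =? _) = false |- _ => apply Z.eqb_neq in H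
 | |- _ && _ = true => apply andb_true_iff; split
 | |- negb _ = true => apply negb_true_iff
 | |- (_ =? _) = true => apply Z.eqb_eq
 | |- (_ =? _) = false => apply Z.eqb_neq
 | |- _ /\ _ => split
 | |- (_, _) = (_, _) => f_equal
 end.

Ltac isconst t := lazymatch t with Z0 => idtac | Zpos _ => idtac | Zneg _ => idtac end.
Ltac clear_nonlin := repeat match goal with
  | H : context[?a * ?b] |- _ => tryif (isconst a) then fail else tryif (isconst b) then fail else clear H
  end.
Ltac zl := first [ Z.div_mod_to_equations; lia | clear_nonlin; Z.div_mod_to_equations; lia ].

Ltac divs := repeat match goal with
 | |- context[?e / ?c] => let X := fresh "X" in let H := fresh "HX" in
     assert (H: e = c * (e / c)) by zl; set (X := e / c) in *; clearbody X;
     let H2 := fresh "HS" in assert (H2: e * e = c*c*(X*X)) by (rewrite H at 1 2; ring)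
 end.

Definition odd3 (x y z : Z) := (x mod 2 =? 1) && (y mod 2 =? 1) && (z mod 2 =? 1).

Lemma EisT c M : 1 <= c ->
  C 1 3 (4*c) (4*M) odd3 = 2 * C 1 3 c M (fun x y z => ((x+y) mod 2 =? 1) && (z mod 2 =? 1)).
Proof.
  intros hc. rewrite (C_split _ _ _ _ _ (fun x y z => (x - y) mod 4 =? 0)).
  replace (2 * C 1 3 c M _) with (C 1 3 c M (fun x y z => ((x+y) mod 2 =? 1) && (z mod 2 =? 1)) + C 1 3 c M (fun x y z => ((x+y) mod 2 =? 1) && (z mod 2 =? 1))) by ring.
  f_equal; symmetry.
  - apply C_bij with (f := fun x y z => (x + 3*y, (x - y, z))); try lia.
    + intros x y z E H; unfold odd3; bprep; zl.
    + intros x y z x' y' z' _ _ H; rewrite !pair_equal_spec in H; lia.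
    + intros p q r E H. unfold odd3 in H. bprep.
      exists ((p + 3*q)/4), ((p - q)/4), r. divs. bprep; zl.
  - apply C_bij with (f := fun x y z => (x - 3*y, (-x - y, z))); try lia.
    + intros x y z E H; unfold odd3; bprep; zl.
    + intros x y z x' y' z' _ _ H; rewrite !pair_equal_spec in H; lia.
    + intros p q r E H. unfold odd3 in H. bprep.
      exists ((p - 3*q)/4), (-(p + q)/4), r. divs. bprep; zl.
Qed.

Lemma tri_nonneg x : 0 <= x * (x + 1).
Proof. destruct (Z_le_gt_dec 0 x); nia. Qed.

Lemma tri_bound x n : 0 <= n -> x * (x + 1) <= 2 * n -> -n - 1 <= x <= n.
Proof. intros. split; nia. Qed.

Lemma trep_C a b c n m : 1 <= a -> 1 <= b -> 1 <= c -> 0 <= n -> m = 8*n + a + b + c ->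
  trep a b c n = C a b c m odd3.
Proof.
  intros ha hb hc hn hm. unfold trep, C.
  apply count3_bij with (f := fun x y z => (2*x+1, (2*y+1, 2*z+1))).
  - intros x y z Hx Hy Hz H. unfold odd3. bprep; zl.
  - intros x y z x' y' z' _ _ H. rewrite !pair_equal_spec in H. lia.
  - intros p q r Hp Hq Hr H. unfold odd3 in H. bprep.
    exists ((p-1)/2), ((q-1)/2), ((r-1)/2). divs.
    assert (p = 2*X+1) by lia. assert (q = 2*X0+1) by lia. assert (r = 2*X1+1) by lia. subst p q r.
    pose proof (tri_nonneg X). pose proof (tri_nonneg X0). pose proof (tri_nonneg X1).
    assert (E : 2 * n = a * (X * (X+1)) + b * (X0 * (X0+1)) + c * (X1 * (X1+1))) by lia.
    assert (a * (X * (X+1)) <= 2*n) by nia.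
    assert (b * (X0 * (X0+1)) <= 2*n) by nia.
    assert (c * (X1 * (X1+1)) <= 2*n) by nia.
    assert (B1 : X * (X+1) <= 2*n) by nia.
    assert (B2 : X0 * (X0+1) <= 2*n) by nia.
    assert (B3 : X1 * (X1+1) <= 2*n) by nia.
    apply tri_bound in B1; auto. apply tri_bound in B2; auto. apply tri_bound in B3; auto.
    bprep; try lia.
Qed.


Lemma dec4 x : exists q, x = 4*q \/ x = 4*q+1 \/ x = 4*q+2 \/ x = 4*q+3.
Proof. exists (x/4). zl. Qed.

Ltac res4 x := let q := fresh "q" in let H := fresh in destruct (dec4 x) as [q [H|[H|[H|H]]]]; subst x.

Ltac fwd := let x := fresh "x" in let y := fresh "y" in let z := fresh "z" in
  intros x y z ? ?; bprep; divs; zl.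
Ltac inj := intros ? ? ? ? ? ? ? ? H; bprep; rewrite !pair_equal_spec in H; zl.
Ltac ext3 := let x := fresh "x" in let y := fresh "y" in let z := fresh "z" in
  intros x y z ? ?; bprep; res4 x; res4 y; res4 z; zl.

Section P1.
Lemma P1a M : M mod 8 = 7 ->
  C 1 3 4 M (fun x y z => ((x+y) mod 2 =? 1) && (z mod 2 =? 1)) =
  C 1 3 4 M (fun x y z => (x mod 4 =? 0) && (y mod 2 =? 1) && (z mod 2 =? 1)).
Proof. intros HM. apply C_ext; ext3. Qed.

Lemma P1b M :
  C 1 3 4 M (fun x y z => (x mod 4 =? 0) && (y mod 2 =? 1) && (z mod 2 =? 1)) =
  C 1 3 4 M (fun x y z => (x mod 4 =? 2) && (y mod 2 =? 1) && (z mod 2 =? 0)).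
Proof.
  apply C_bij with (f := fun x y z => (2*z, (y, x/2))); try lia.
  - fwd.
  - inj.
  - intros p q r E H; bprep. exists (2*r), q, (p/2). divs; bprep; zl.
Qed.

Lemma P1c M : M mod 8 = 7 ->
  C 1 3 4 M (fun x y z => (x mod 4 =? 2) && (y mod 2 =? 1) && (z mod 2 =? 0)) =
  C 1 3 4 M (fun x y z => (z mod 2 =? 0)).
Proof. intros HM. apply C_ext; ext3. Qed.

Lemma P1d M : C 1 3 4 M (fun x y z => (z mod 2 =? 0)) = Nrep 1 3 16 M.
Proof.
  rewrite Nrep_C. symmetry.
  apply C_bij with (f := fun x y z => (x, (y, 2*z))); try lia.
  - fwd.
  - inj.
  - intros p q r E H; bprep. exists p, q, (r/2). divs; bprep; zl.
Qed.

Lemma Q2 M : C 2 2 3 M odd3 = C 4 4 3 M (fun x y z => ((x+y) mod 2 =? 1) && (z mod 2 =? 1)).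
Proof.
  apply C_bij with (f := fun x y z => ((x+y)/2, ((x-y)/2, z))); try lia.
  - unfold odd3; fwd.
  - unfold odd3; inj.
  - intros p q r E H; bprep. exists (p+q), (p-q), r. unfold odd3. divs; bprep; zl.
Qed.

Lemma Q3 M : C 4 4 3 M (fun x y z => ((x+y) mod 2 =? 1) && (z mod 2 =? 1)) =
  2 * C 4 16 3 M (fun x y z => (x mod 2 =? 1) && (z mod 2 =? 1)).
Proof.
  rewrite (C_split _ _ _ _ _ (fun x y z => x mod 2 =? 1)).
  replace (2 * C 4 16 3 M _) with (C 4 16 3 M (fun x y z => (x mod 2 =? 1) && (z mod 2 =? 1)) + C 4 16 3 M (fun x y z => (x mod 2 =? 1) && (z mod 2 =? 1))) by ring.
  f_equal; symmetry.
  - apply C_bij with (f := fun x y z => (x, (2*y, z))); try lia.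
    + fwd.
    + inj.
    + intros p q r E H; bprep. exists p, (q/2), r. divs; bprep; zl.
  - apply C_bij with (f := fun x y z => (2*y, (x, z))); try lia.
    + fwd.
    + inj.
    + intros p q r E H; bprep. exists q, (p/2), r. divs; bprep; zl.
Qed.

Lemma Q4 M : C 4 16 3 M (fun x y z => (x mod 2 =? 1) && (z mod 2 =? 1)) =
  C 1 3 16 M (fun x y z => (x mod 4 =? 2) && (y mod 2 =? 1)).
Proof.
  apply C_bij with (f := fun x y z => (2*x, (z, y))); try lia.
  - fwd.
  - inj.
  - intros p q r E H; bprep. exists (p/2), r, q. divs; bprep; zl.
Qed.

Lemma Q5 M : M mod 8 = 7 ->
  C 1 3 16 M (fun x y z => (x mod 4 =? 2) && (y mod 2 =? 1)) = Nrep 1 3 16 M.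
Proof. intros HM. rewrite Nrep_C. apply C_ext; ext3. Qed.

Lemma part1 n : 0 < n -> n mod 4 = 1 ->
     trep 1 3 16 n = 2 * Nrep 1 3 16 (2*n+5) /\
     2 * Nrep 1 3 16 (2*n+5) = trep 2 2 3 ((n-1)/4).
Proof.
  intros hn h4. split.
  - rewrite (trep_C 1 3 16 n (4*(2*n+5))) by lia.
    transitivity (C 1 3 (4*4) (4*(2*n+5)) odd3); [reflexivity|].
    rewrite EisT by lia. rewrite P1a by zl. rewrite P1b, P1c by zl. rewrite P1d. reflexivity.
  - rewrite (trep_C 2 2 3 ((n-1)/4) (2*n+5)) by zl.
    rewrite Q2, Q3, Q4, Q5 by zl. reflexivity.
Qed.
End P1.


Lemma R2a M : M mod 8 = 5 ->
  C 1 3 12 M (fun x y z => ((x+y) mod 2 =? 1) && (z mod 2 =? 1)) =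
  C 1 3 12 M (fun x y z => (x mod 2 =? 1) && (y mod 4 =? 0) && (z mod 2 =? 1)).
Proof. intros HM. apply C_ext; ext3. Qed.

Lemma R2b M :
  C 1 3 12 M (fun x y z => (x mod 2 =? 1) && (y mod 4 =? 0) && (z mod 2 =? 1)) =
  C 1 3 12 M (fun x y z => (x mod 2 =? 1) && (y mod 4 =? 2) && (z mod 2 =? 0)).
Proof.
  apply C_bij with (f := fun x y z => (x, (2*z, y/2))); try lia.
  - fwd.
  - inj.
  - intros p q r E H; bprep. exists p, (2*r), (q/2). divs; bprep; zl.
Qed.

Lemma R2c M : M mod 8 = 5 ->
  C 1 3 12 M (fun x y z => (x mod 2 =? 1) && (y mod 4 =? 2) && (z mod 2 =? 0)) =
  C 1 3 12 M (fun x y z => (z mod 2 =? 0)).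
Proof. intros HM. apply C_ext; ext3. Qed.

Lemma R2d M : C 1 3 12 M (fun x y z => (z mod 2 =? 0)) = Nrep 1 3 48 M.
Proof.
  rewrite Nrep_C. symmetry.
  apply C_bij with (f := fun x y z => (x, (y, 2*z))); try lia.
  - fwd.
  - inj.
  - intros p q r E H; bprep. exists p, q, (r/2). divs; bprep; zl.
Qed.

Lemma S2 M : C 1 6 6 M odd3 = C 1 12 12 M (fun x y z => (x mod 2 =? 1) && ((y+z) mod 2 =? 1)).
Proof.
  apply C_bij with (f := fun x y z => (x, ((y+z)/2, (y-z)/2))); try lia.
  - unfold odd3; fwd.
  - unfold odd3; inj.
  - intros p q r E H; bprep. exists p, (q+r), (q-r). unfold odd3. divs; bprep; zl.
Qed.

Lemma S3 M : C 1 12 12 M (fun x y z => (x mod 2 =? 1) && ((y+z) mod 2 =? 1)) =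
  2 * C 1 12 48 M (fun x y z => (x mod 2 =? 1) && (y mod 2 =? 1)).
Proof.
  rewrite (C_split _ _ _ _ _ (fun x y z => y mod 2 =? 1)).
  replace (2 * C 1 12 48 M _) with (C 1 12 48 M (fun x y z => (x mod 2 =? 1) && (y mod 2 =? 1)) + C 1 12 48 M (fun x y z => (x mod 2 =? 1) && (y mod 2 =? 1))) by ring.
  f_equal; symmetry.
  - apply C_bij with (f := fun x y z => (x, (y, 2*z))); try lia.
    + fwd.
    + inj.
    + intros p q r E H; bprep. exists p, q, (r/2). divs; bprep; zl.
  - apply C_bij with (f := fun x y z => (x, (2*z, y))); try lia.
    + fwd.
    + inj.
    + intros p q r E H; bprep. exists p, r, (q/2). divs; bprep; zl.
Qed.

Lemma S4 M : C 1 12 48 M (fun x y z => (x mod 2 =? 1) && (y mod 2 =? 1)) =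
  C 1 3 48 M (fun x y z => (x mod 2 =? 1) && (y mod 4 =? 2)).
Proof.
  apply C_bij with (f := fun x y z => (x, (2*y, z))); try lia.
  - fwd.
  - inj.
  - intros p q r E H; bprep. exists p, (q/2), r. divs; bprep; zl.
Qed.

Lemma S5 M : M mod 8 = 5 ->
  C 1 3 48 M (fun x y z => (x mod 2 =? 1) && (y mod 4 =? 2)) = Nrep 1 3 48 M.
Proof. intros HM. rewrite Nrep_C. apply C_ext; ext3. Qed.

Lemma part2 n : 0 < n -> n mod 4 = 0 ->
     trep 1 3 48 n = 2 * Nrep 1 3 48 (2*n+13) /\
     2 * Nrep 1 3 48 (2*n+13) = trep 1 6 6 (n/4).
Proof.
  intros hn h4. split.
  - rewrite (trep_C 1 3 48 n (4*(2*n+13))) by lia.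
    transitivity (C 1 3 (4*12) (4*(2*n+13)) odd3); [reflexivity|].
    rewrite EisT by lia. rewrite R2a by zl. rewrite R2b, R2c by zl. rewrite R2d. reflexivity.
  - rewrite (trep_C 1 6 6 (n/4) (2*n+13)) by zl.
    rewrite S2, S3, S4, S5 by zl. reflexivity.
Qed.


Lemma Nz c M : 1 <= c -> C 1 3 c M (fun x y z => (z mod 2 =? 0)) = Nrep 1 3 (4*c) M.
Proof.
  intros hc. rewrite Nrep_C. symmetry.
  apply C_bij with (f := fun x y z => (x, (y, 2*z))); try lia.
  - fwd.
  - inj.
  - intros p q r E H; bprep. exists p, q, (r/2). divs; bprep; zl.
Qed.

Lemma Bpart c L : 1 <= c ->
  C 1 3 c (4*L) (fun x y z => (z mod 2 =? 0)) =
  2 * C 1 3 c L (fun x y z => ((x+y) mod 2 =? 1)) + C 1 3 c L (fun _ _ _ => true).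
Proof.
  intros hc. rewrite (C_split _ _ _ _ _ (fun x y z => x mod 2 =? 1)). f_equal.
  - transitivity (C 1 3 c (4*L) (fun x y z => (x mod 2 =? 1) && (y mod 2 =? 1) && (z mod 2 =? 0))).
    { apply C_ext; ext3. }
    rewrite (C_split _ _ _ _ _ (fun x y z => (x - y) mod 4 =? 0)).
    replace (2 * C 1 3 c L _) with (C 1 3 c L (fun x y z => ((x+y) mod 2 =? 1)) + C 1 3 c L (fun x y z => ((x+y) mod 2 =? 1))) by ring.
    f_equal; symmetry.
    + apply C_bij with (f := fun x y z => (x + 3*y, (x - y, 2*z))); try lia.
      * fwd.
      * inj.
      * intros p q r E H; bprep. exists ((p + 3*q)/4), ((p - q)/4), (r/2). divs; bprep; zl.
    + apply C_bij with (f := fun x y z => (x - 3*y, (-x - y, 2*z))); try lia.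
      * fwd.
      * inj.
      * intros p q r E H; bprep. exists ((p - 3*q)/4), (-(p + q)/4), (r/2). divs; bprep; zl.
  - transitivity (C 1 3 c (4*L) (fun x y z => (x mod 2 =? 0) && (y mod 2 =? 0) && (z mod 2 =? 0))).
    { apply C_ext; ext3. }
    symmetry.
    apply C_bij with (f := fun x y z => (2*x, (2*y, 2*z))); try lia.
    + fwd.
    + inj.
    + intros p q r E H; bprep. exists (p/2), (q/2), (r/2). divs; bprep; zl.
Qed.

Lemma S2_3 L : C 1 3 1 (4*L) (fun x y z => ((x+y) mod 2 =? 1) && (z mod 2 =? 1)) =
  2 * C 1 3 1 L (fun x y z => ((y+z) mod 2 =? 1)).
Proof.
  transitivity (C 1 3 1 (4*L) (fun x y z => (x mod 2 =? 0) && (y mod 2 =? 1) && (z mod 2 =? 1))).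
  { apply C_ext; ext3. }
  rewrite (C_split _ _ _ _ _ (fun x y z => (z - y) mod 4 =? 0)).
  replace (2 * C 1 3 1 L _) with (C 1 3 1 L (fun x y z => ((y+z) mod 2 =? 1)) + C 1 3 1 L (fun x y z => ((y+z) mod 2 =? 1))) by ring.
  f_equal; symmetry.
  - apply C_bij with (f := fun x y z => (2*x, (z - y, z + 3*y))); try lia.
    + fwd.
    + inj.
    + intros p q r E H; bprep. exists (p/2), ((r - q)/4), ((3*q + r)/4). divs; bprep; zl.
  - apply C_bij with (f := fun x y z => (2*x, (-z - y, z - 3*y))); try lia.
    + fwd.
    + inj.
    + intros p q r E H; bprep. exists (p/2), (-(q + r)/4), ((r - 3*q)/4). divs; bprep; zl.
Qed.

Lemma S2_4 L : C 1 3 3 (4*L) (fun x y z => ((x+y) mod 2 =? 1) && (z mod 2 =? 1)) =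
  2 * C 1 3 3 L (fun x y z => ((x+z) mod 2 =? 1)).
Proof.
  transitivity (C 1 3 3 (4*L) (fun x y z => (x mod 2 =? 1) && (y mod 2 =? 0) && (z mod 2 =? 1))).
  { apply C_ext; ext3. }
  rewrite (C_split _ _ _ _ _ (fun x y z => (x - z) mod 4 =? 0)).
  replace (2 * C 1 3 3 L _) with (C 1 3 3 L (fun x y z => ((x+z) mod 2 =? 1)) + C 1 3 3 L (fun x y z => ((x+z) mod 2 =? 1))) by ring.
  f_equal; symmetry.
  - apply C_bij with (f := fun x y z => (x + 3*z, (2*y, x - z))); try lia.
    + fwd.
    + inj.
    + intros p q r E H; bprep. exists ((p + 3*r)/4), (q/2), ((p - r)/4). divs; bprep; zl.
  - apply C_bij with (f := fun x y z => (x - 3*z, (2*y, -x - z))); try lia.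
    + fwd.
    + inj.
    + intros p q r E H; bprep. exists ((p - 3*r)/4), (q/2), (-(p + r)/4). divs; bprep; zl.
Qed.

Lemma S2_5 L : C 1 3 9 (4*L) (fun x y z => ((x+y) mod 2 =? 1) && (z mod 2 =? 1)) =
  2 * C 1 3 9 L (fun x y z => ((y+z) mod 2 =? 1)).
Proof.
  transitivity (C 1 3 9 (4*L) (fun x y z => (x mod 2 =? 0) && (y mod 2 =? 1) && (z mod 2 =? 1))).
  { apply C_ext; ext3. }
  rewrite (C_split _ _ _ _ _ (fun x y z => (y - z) mod 4 =? 0)).
  replace (2 * C 1 3 9 L _) with (C 1 3 9 L (fun x y z => ((y+z) mod 2 =? 1)) + C 1 3 9 L (fun x y z => ((y+z) mod 2 =? 1))) by ring.
  f_equal; symmetry.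
  - apply C_bij with (f := fun x y z => (2*x, (y + 3*z, y - z))); try lia.
    + fwd.
    + inj.
    + intros p q r E H; bprep. exists (p/2), ((q + 3*r)/4), ((q - r)/4). divs; bprep; zl.
  - apply C_bij with (f := fun x y z => (2*x, (y - 3*z, -y - z))); try lia.
    + fwd.
    + inj.
    + intros p q r E H; bprep. exists (p/2), ((q - 3*r)/4), (-(q + r)/4). divs; bprep; zl.
Qed.


Lemma part3 n : 0 < n -> (n mod 8 = 3 \/ n mod 8 = 5) ->
     3 * trep 1 3 4 n = 4 * Nrep 1 3 4 (2*n+2).
Proof.
  intros hn h8. set (L := (n+1)/2).
  assert (HL : 2*n+2 = 4*L) by (unfold L; zl).
  assert (HL4 : L mod 4 = 2 \/ L mod 4 = 3) by (unfold L; zl).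
  clearbody L.
  rewrite (trep_C 1 3 4 n (4*(4*L))) by lia.
  transitivity (3 * C 1 3 (4*1) (4*(4*L)) odd3); [reflexivity|].
  rewrite EisT, S2_3 by lia. rewrite HL.
  transitivity (4 * Nrep 1 3 (4*1) (4*L)); [|reflexivity].
  rewrite <- Nz, Bpart by lia.
  assert (E1 : C 1 3 1 L (fun x y z => ((y+z) mod 2 =? 1)) = C 1 3 1 L (fun _ _ _ => true))
    by (apply C_ext; ext3).
  assert (E2 : C 1 3 1 L (fun x y z => ((x+y) mod 2 =? 1)) = C 1 3 1 L (fun _ _ _ => true))
    by (apply C_ext; ext3).
  rewrite E1, E2. ring.
Qed.

Lemma part4 n : 0 < n -> (n mod 8 = 0 \/ n mod 8 = 2) ->
     3 * trep 1 3 12 n = 4 * Nrep 1 3 12 (2*n+4).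
Proof.
  intros hn h8. set (L := (n+2)/2).
  assert (HL : 2*n+4 = 4*L) by (unfold L; zl).
  assert (HL4 : L mod 4 = 1 \/ L mod 4 = 2) by (unfold L; zl).
  clearbody L.
  rewrite (trep_C 1 3 12 n (4*(4*L))) by lia.
  transitivity (3 * C 1 3 (4*3) (4*(4*L)) odd3); [reflexivity|].
  rewrite EisT, S2_4 by lia. rewrite HL.
  transitivity (4 * Nrep 1 3 (4*3) (4*L)); [|reflexivity].
  rewrite <- Nz, Bpart by lia.
  assert (E1 : C 1 3 3 L (fun x y z => ((x+z) mod 2 =? 1)) = C 1 3 3 L (fun _ _ _ => true))
    by (apply C_ext; ext3).
  assert (E2 : C 1 3 3 L (fun x y z => ((x+y) mod 2 =? 1)) = C 1 3 3 L (fun _ _ _ => true))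
    by (apply C_ext; ext3).
  rewrite E1, E2. ring.
Qed.

Lemma part5 n : 0 < n -> (n mod 8 = 1 \/ n mod 8 = 7) ->
     3 * trep 1 3 36 n = 4 * Nrep 1 3 36 (2*n+10).
Proof.
  intros hn h8. set (L := (n+5)/2).
  assert (HL : 2*n+10 = 4*L) by (unfold L; zl).
  assert (HL4 : L mod 4 = 2 \/ L mod 4 = 3) by (unfold L; zl).
  clearbody L.
  rewrite (trep_C 1 3 36 n (4*(4*L))) by lia.
  transitivity (3 * C 1 3 (4*9) (4*(4*L)) odd3); [reflexivity|].
  rewrite EisT, S2_5 by lia. rewrite HL.
  transitivity (4 * Nrep 1 3 (4*9) (4*L)); [|reflexivity].
  rewrite <- Nz, Bpart by lia.
  assert (E1 : C 1 3 9 L (fun x y z => ((y+z) mod 2 =? 1)) = C 1 3 9 L (fun _ _ _ => true))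
    by (apply C_ext; ext3).
  assert (E2 : C 1 3 9 L (fun x y z => ((x+y) mod 2 =? 1)) = C 1 3 9 L (fun _ _ _ => true))
    by (apply C_ext; ext3).
  rewrite E1, E2. ring.
Qed.


Lemma Eis6 M : C 3 4 9 (4*M) odd3 = 2 * C 3 1 9 M (fun x y z => ((x+z) mod 2 =? 1) && (y mod 2 =? 1)).
Proof.
  rewrite (C_split _ _ _ _ _ (fun x y z => (x - z) mod 4 =? 0)).
  replace (2 * C 3 1 9 M _) with (C 3 1 9 M (fun x y z => ((x+z) mod 2 =? 1) && (y mod 2 =? 1)) + C 3 1 9 M (fun x y z => ((x+z) mod 2 =? 1) && (y mod 2 =? 1))) by ring.
  f_equal; symmetry.
  - apply C_bij with (f := fun x y z => (x + 3*z, (y, x - z))); try lia.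
    + unfold odd3; fwd.
    + inj.
    + intros p q r E H. unfold odd3 in H. bprep.
      exists ((p + 3*r)/4), q, ((p - r)/4). divs. bprep; zl.
  - apply C_bij with (f := fun x y z => (x - 3*z, (y, -x - z))); try lia.
    + unfold odd3; fwd.
    + inj.
    + intros p q r E H. unfold odd3 in H. bprep.
      exists ((p - 3*r)/4), q, (-(p + r)/4). divs. bprep; zl.
Qed.

Lemma S2_6 L : C 3 1 9 (4*L) (fun x y z => ((x+z) mod 2 =? 1) && (y mod 2 =? 1)) =
  2 * C 3 1 9 L (fun x y z => ((x+y) mod 2 =? 1)).
Proof.
  transitivity (C 3 1 9 (4*L) (fun x y z => (x mod 2 =? 1) && (y mod 2 =? 1) && (z mod 2 =? 0))).
  { apply C_ext; ext3. }
  rewrite (C_split _ _ _ _ _ (fun x y z => (y - x) mod 4 =? 0)).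
  replace (2 * C 3 1 9 L _) with (C 3 1 9 L (fun x y z => ((x+y) mod 2 =? 1)) + C 3 1 9 L (fun x y z => ((x+y) mod 2 =? 1))) by ring.
  f_equal; symmetry.
  - apply C_bij with (f := fun x y z => (y - x, (y + 3*x, 2*z))); try lia.
    + fwd.
    + inj.
    + intros p q r E H; bprep. exists ((q - p)/4), ((3*p + q)/4), (r/2). divs; bprep; zl.
  - apply C_bij with (f := fun x y z => (-y - x, (y - 3*x, 2*z))); try lia.
    + fwd.
    + inj.
    + intros p q r E H; bprep. exists (-(p + q)/4), ((q - 3*p)/4), (r/2). divs; bprep; zl.
Qed.

Lemma Nz6 M : C 3 1 9 M (fun x y z => (y mod 2 =? 0)) = Nrep 3 4 9 M.
Proof.
  rewrite Nrep_C. symmetry.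
  apply C_bij with (f := fun x y z => (x, (2*y, z))); try lia.
  - fwd.
  - inj.
  - intros p q r E H; bprep. exists p, (q/2), r. divs; bprep; zl.
Qed.

Lemma B6 L :
  C 3 1 9 (4*L) (fun x y z => (y mod 2 =? 0)) =
  2 * C 3 1 9 L (fun x y z => ((x+z) mod 2 =? 1)) + C 3 1 9 L (fun _ _ _ => true).
Proof.
  rewrite (C_split _ _ _ _ _ (fun x y z => x mod 2 =? 1)). f_equal.
  - transitivity (C 3 1 9 (4*L) (fun x y z => (x mod 2 =? 1) && (y mod 2 =? 0) && (z mod 2 =? 1))).
    { apply C_ext; ext3. }
    rewrite (C_split _ _ _ _ _ (fun x y z => (x - z) mod 4 =? 0)).
    replace (2 * C 3 1 9 L _) with (C 3 1 9 L (fun x y z => ((x+z) mod 2 =? 1)) + C 3 1 9 L (fun x y z => ((x+z) mod 2 =? 1))) by ring.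
    f_equal; symmetry.
    + apply C_bij with (f := fun x y z => (x + 3*z, (2*y, x - z))); try lia.
      * fwd.
      * inj.
      * intros p q r E H; bprep. exists ((p + 3*r)/4), (q/2), ((p - r)/4). divs; bprep; zl.
    + apply C_bij with (f := fun x y z => (x - 3*z, (2*y, -x - z))); try lia.
      * fwd.
      * inj.
      * intros p q r E H; bprep. exists ((p - 3*r)/4), (q/2), (-(p + r)/4). divs; bprep; zl.
  - transitivity (C 3 1 9 (4*L) (fun x y z => (x mod 2 =? 0) && (y mod 2 =? 0) && (z mod 2 =? 0))).
    { apply C_ext; ext3. }
    symmetry.
    apply C_bij with (f := fun x y z => (2*x, (2*y, 2*z))); try lia.
    + fwd.
    + inj.
    + intros p q r E H; bprep. exists (p/2), (q/2), (r/2). divs; bprep; zl.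
Qed.

Lemma part6 n : 0 < n -> (n mod 8 = 2 \/ n mod 8 = 4) ->
     3 * trep 3 4 9 n = 4 * Nrep 3 4 9 (2*n+4).
Proof.
  intros hn h8. set (L := (n+2)/2).
  assert (HL : 2*n+4 = 4*L) by (unfold L; zl).
  assert (HL4 : L mod 4 = 2 \/ L mod 4 = 3) by (unfold L; zl).
  clearbody L.
  rewrite (trep_C 3 4 9 n (4*(4*L))) by lia.
  rewrite Eis6, S2_6. rewrite HL, <- Nz6, B6.
  assert (E1 : C 3 1 9 L (fun x y z => ((x+y) mod 2 =? 1)) = C 3 1 9 L (fun _ _ _ => true))
    by (apply C_ext; ext3).
  assert (E2 : C 3 1 9 L (fun x y z => ((x+z) mod 2 =? 1)) = C 3 1 9 L (fun _ _ _ => true))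
    by (apply C_ext; ext3).
  rewrite E1, E2. ring.
Qed.


Theorem theorem4p1 (n : Z) (hn : 0 < n) :
  (n mod 4 = 1 ->
     trep 1 3 16 n = 2 * Nrep 1 3 16 (2*n+5) /\
     2 * Nrep 1 3 16 (2*n+5) = trep 2 2 3 ((n-1)/4)) /\
  (n mod 4 = 0 ->
     trep 1 3 48 n = 2 * Nrep 1 3 48 (2*n+13) /\
     2 * Nrep 1 3 48 (2*n+13) = trep 1 6 6 (n/4)) /\
  ((n mod 8 = 3 \/ n mod 8 = 5) ->
     3 * trep 1 3 4 n = 4 * Nrep 1 3 4 (2*n+2)) /\
  ((n mod 8 = 0 \/ n mod 8 = 2) ->
     3 * trep 1 3 12 n = 4 * Nrep 1 3 12 (2*n+4)) /\
  ((n mod 8 = 1 \/ n mod 8 = 7) ->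
     3 * trep 1 3 36 n = 4 * Nrep 1 3 36 (2*n+10)) /\
  ((n mod 8 = 2 \/ n mod 8 = 4) ->
     3 * trep 3 4 9 n = 4 * Nrep 3 4 9 (2*n+4)).
Proof.
  split; [intros; apply part1; auto|].
  split; [intros; apply part2; auto|].
  split; [intros; apply part3; auto|].
  split; [intros; apply part4; auto|].
  split; [intros; apply part5; auto|].
  intros; apply part6; auto.
Qed.
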